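(* For every $n\ge0$, $\phi_n(x)=(x-1)\cdot U^{\mathrm{e}}_n(x)\cdot S_n(x)$.
   Context: $U_n(x)$ is the Chebyshev polynomial of the second kind ($U_n(\cos\theta)=\sin((n+1)\theta)/\sin\theta$), with $U_{-1}=0$. The partial Chebyshev polynomial $U^{\mathrm{e}}_n$ is the polynomial with $U^{\mathrm{e}}_n(\cos\theta)=\frac{\sin((n+1)\theta/2)}{\sin(\theta/2)}$ for even $n$ and $U^{\mathrm{e}}_n(\cos\theta)=\frac{\sin((n+1)\theta/2)}{\sin\theta}$ for odd $n$. Define $\phi_n(x)=((n+1)x^2-3x-n)U_n(x)+(x+1)(U_{n-1}(x)+1)$ and, for $n\ge0$, $S_{2n}(x)=(2nx+x+2n-1)U_n(x)-(2nx+3x+2n+1)U_{n-1}(x)$, $S_{2n+1}(x)=2(2nx^2+2x^2+2nx-x-1)U_n(x)-2(2nx+3x+2n+1)U_{n-1}(x)$. *)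

(* Defs.v *)
From HB Require Import structures.
From mathcomp Require Import all_boot all_order all_algebra.
From mathcomp Require Import all_classical all_reals all_analysis.
Set Implicit Arguments. Unset Strict Implicit. Unset Printing Implicit Defensive.
Import Order.TTheory GRing.Theory Num.Theory.
Local Open Scope ring_scope.

Section Cheb.
Variable R : comNzRingType.

(* chebUpair n = (U_{n-1}, U_n), with U_{-1} = 0, U_0 = 1,
   U_{n+1} = 2 x U_n - U_{n-1}. *)
Fixpoint chebUpair (n : nat) : {poly R} * {poly R} :=
  match n with
  | 0%N => (0, 1)
  | m.+1 => let: (a, b) := chebUpair m in (b, 2%:P * 'X * b - a)
  end.

Definition chebU (n : nat) : {poly R} := (chebUpair n).2.
Definition chebUm1 (n : nat) : {poly R} := (chebUpair n).1.

Definition phi (n : nat) : {poly R} :=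
  ((n.+1)%:R%:P * 'X ^+ 2 - 3%:P * 'X - n%:R%:P) * chebU n
  + ('X + 1) * (chebUm1 n + 1).

Definition Spoly (k : nat) : {poly R} :=
  let m := k./2 in
  let M := (2 * m)%:R%:P : {poly R} in
  if odd k then
    2%:P * (M * 'X ^+ 2 + 2%:P * 'X ^+ 2 + M * 'X - 'X - 1) * chebU m
    - 2%:P * (M * 'X + 3%:P * 'X + M + 1) * chebUm1 m
  else
    (M * 'X + 'X + M - 1) * chebU m
    - (M * 'X + 3%:P * 'X + M + 1) * chebUm1 m.

End Cheb.

(* Main.v *)
Require Import Defs.
From HB Require Import structures.
From mathcomp Require Import all_boot all_order all_algebra.
From mathcomp Require Import all_classical all_reals all_analysis.
From mathcomp Require Import ring lra.
Import Order.TTheory GRing.Theory Num.Theory.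
Local Open Scope ring_scope.
Section A.
Variable R : comNzRingType.
Lemma chebU_S m : chebU R m.+1 = 2%:P * 'X * chebU R m - chebUm1 R m.
Proof. by rewrite /chebU /chebUm1 /=; case: chebUpair. Qed.
Lemma chebUm1_S m : chebUm1 R m.+1 = chebU R m.
Proof. by rewrite /chebU /chebUm1 /=; case: chebUpair. Qed.
Lemma chebU0 : chebU R 0 = 1. Proof. by []. Qed.
Lemma chebUm10 : chebUm1 R 0 = 0. Proof. by []. Qed.

Lemma cassini m : chebU R m ^+ 2 - 2%:P * 'X * chebU R m * chebUm1 R m + chebUm1 R m ^+ 2 = 1.
Proof.
elim: m => [|m IH]; first by rewrite chebU0 chebUm10; ring.
rewrite chebU_S chebUm1_S -IH; ring.
Qed.

Lemma dbl m : chebU R m.*2 = chebU R m ^+ 2 - chebUm1 R m ^+ 2 /\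
  chebUm1 R m.*2 = 2%:P * chebUm1 R m * (chebU R m - 'X * chebUm1 R m).
Proof.
elim: m => [|m [IH1 IH2]]; first by rewrite /= chebU0 chebUm10; split; ring.
rewrite doubleS !chebU_S !chebUm1_S chebU_S IH1 IH2; split; ring.
Qed.

Lemma dbl1 m : chebU R m.*2.+1 = 2%:P * chebU R m * ('X * chebU R m - chebUm1 R m) /\
  chebUm1 R m.*2.+1 = chebU R m ^+ 2 - chebUm1 R m ^+ 2.
Proof.
have [H1 H2] := dbl m. rewrite chebU_S chebUm1_S H1 H2; split; ring.
Qed.
End A.
Section B.
Variable R : comNzRingType.
Lemma even_case m : phi R m.*2 = ('X - 1) * (chebU R m + chebUm1 R m) * Spoly R m.*2.
Proof.
have [H1 H2] := dbl R m. have C := cassini R m.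
rewrite /phi /Spoly odd_double doubleK.
rewrite -[chebUm1 R m.*2 + 1]/(chebUm1 R m.*2 + 1) -{2}C H1 H2.
rewrite !polyC_natr -!muln2.
move: (chebU R m) (chebUm1 R m) => a b.
ring.
Qed.
Lemma odd_case m : phi R m.*2.+1 = ('X - 1) * chebU R m * Spoly R m.*2.+1.
Proof.
have [H1 H2] := dbl1 R m. have C := cassini R m.
rewrite /phi /Spoly /= odd_double uphalf_double.
rewrite H1 H2 /= -[X in (_ + 1) * (_ + X)]C.
rewrite !polyC_natr -!muln2.
move: (chebU R m) (chebUm1 R m) => a b.
ring.
Qed.
End B.
Section C.
Variable R : realType.

Lemma poly_eq01 (p q : {poly R}) :
  (forall x : R, 0 < x < 1 -> p.[x] = q.[x]) -> p = q.
Proof.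
move=> H; apply/eqP; rewrite -subr_eq0; apply/eqP.
apply: (@roots_geq_poly_eq0 _ _ [seq (k.+2%:R : R)^-1 | k <- iota 0 (size (p - q))]).
- apply/allP => x /mapP [k _ ->]; rewrite /root hornerD hornerN H ?subrr //.
  rewrite invr_gt0 ltr0n /= invf_lt1 ?ltr0n // ltr1n //.
- rewrite map_inj_uniq ?iota_uniq // => i j /invr_inj /eqP.
  by rewrite eqr_nat => /eqP [].
- by rewrite size_map size_iota.
Qed.

Lemma cheb_eval m t : (chebU R m).[cos t] * sin t = sin (m.+1%:R * t) /\
  (chebUm1 R m).[cos t] * sin t = sin (m%:R * t).
Proof.
elim: m => [|m [IH1 IH2]].
  by rewrite chebU0 chebUm10 !hornerC mul1r !mul0r mul1r sin0.
rewrite chebU_S chebUm1_S IH1; split => //.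
rewrite hornerD hornerN !hornerM hornerX hornerC mulrBl IH2 -!mulrA IH1.
have -> : m%:R * t = m.+1%:R * t - t by rewrite -natr1; ring.
have -> : m.+2%:R * t = m.+1%:R * t + t by rewrite -[m.+2]addn1 natrD; ring.
rewrite sinB sinD; ring.
Qed.
End C.
Section D.
Variable R : realType.
Lemma acos_facts (x : R) : 0 < x < 1 ->
  cos (acos x) = x /\ sin (acos x / 2) != 0 /\ cos (acos x / 2) != 0 /\
  sin (acos x) = 2 * sin (acos x / 2) * cos (acos x / 2).
Proof.
move=> /andP[x0 x1].
have xB : -1 <= x <= 1 by apply/andP; split; lra.
have hc : cos (acos x) = x by apply: acosK; rewrite in_itv /=.
have hs2 : sin (acos x) = 2 * sin (acos x / 2) * cos (acos x / 2).
  by rewrite {1}(splitr (acos x)) sinD; ring.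
have hs : 0 < sin (acos x) by rewrite sin_acos // sqrtr_gt0; nra.
split=> //; split; last split=> //.
  by apply/eqP => h; move: hs; rewrite hs2 h; lra.
by apply/eqP => h; move: hs; rewrite hs2 h; lra.
Qed.

Lemma Ue_even (Ue : nat -> {poly R})
  (HUe_even : forall (n : nat) (t : R), ~~ odd n -> sin (t / 2) != 0 ->
      (Ue n).[cos t] = sin ((n.+1)%:R * t / 2) / sin (t / 2)) m :
  Ue m.*2 = chebU R m + chebUm1 R m.
Proof.
apply: poly_eq01 => x hx.
have [hc [sv [cv hs]]] := acos_facts _ hx.
set t := acos x in hc sv cv hs.
rewrite -hc HUe_even ?odd_double //.
have [E1 E2] := cheb_eval R m t.
have E : (chebU R m + chebUm1 R m).[cos t] * sin t =
   2 * sin ((m.*2).+1%:R * t / 2) * cos (t / 2).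
  rewrite hornerD mulrDl E1 E2.
  have -> : m.+1%:R * t = (m.*2).+1%:R * t / 2 + t / 2.
    by rewrite -muln2; field.
  have -> : m%:R * t = (m.*2).+1%:R * t / 2 - t / 2.
    by rewrite -muln2; field.
  rewrite sinB sinD; ring.
move: E; rewrite hs => E.
set A := (chebU R m + chebUm1 R m).[cos t] in E *.
have -> : A = A * (2 * sin (t / 2) * cos (t / 2)) / (2 * sin (t / 2) * cos (t / 2)).
  by field; rewrite sv cv /=; lra.
rewrite E; field; rewrite sv cv /=; lra.
Qed.

Lemma Ue_odd (Ue : nat -> {poly R})
  (HUe_odd : forall (n : nat) (t : R), odd n -> sin t != 0 ->
      (Ue n).[cos t] = sin ((n.+1)%:R * t / 2) / sin t) m :
  Ue m.*2.+1 = chebU R m.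
Proof.
apply: poly_eq01 => x hx.
have [hc [sv [cv hs]]] := acos_facts _ hx.
set t := acos x in hc sv cv hs.
have st : sin t != 0 by rewrite hs !mulf_neq0 //; apply/eqP; lra.
rewrite -hc HUe_odd //; last by rewrite /= odd_double.
have [E1 _] := cheb_eval R m t.
have -> : (m.*2.+2)%:R * t / 2 = m.+1%:R * t.
  by rewrite -muln2; field.
by rewrite -E1 (mulfK st).
Qed.
End D.

Theorem mainTheorem11 (R : realType) (Ue : nat -> {poly R})
  (HUe_even : forall (n : nat) (t : R), ~~ odd n -> sin (t / 2) != 0 ->
      (Ue n).[cos t] = sin ((n.+1)%:R * t / 2) / sin (t / 2))
  (HUe_odd : forall (n : nat) (t : R), odd n -> sin t != 0 ->
      (Ue n).[cos t] = sin ((n.+1)%:R * t / 2) / sin t)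
  (n : nat) :
  phi R n = ('X - 1) * Ue n * Spoly R n.
Proof.
have En := odd_double_half n.
case h : (odd n).
- have -> : n = (n./2).*2.+1 by rewrite -{1}En h.
  by rewrite (@Ue_odd R Ue HUe_odd) odd_case.
- have -> : n = (n./2).*2 by rewrite -{1}En h.
  by rewrite (@Ue_even R Ue HUe_even) even_case.
Qed.
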